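(* Let $k$ and $n$ be positive integers, and let $\mathcal{P}$ be a partition of $\mathbb{R}^k$ into polytopes. Then there exist a polytope $P_0\in\mathcal{P}$ and a point $\mathbf{w}=(w_1,\dots,w_n)\in(0,1)^n$ such that $w_1>w_2>\dots>w_n$ and, for every ascending $k$-tuple of indices $1\le i_1<\dots<i_k\le n$, the point $(w_{i_1},\dots,w_{i_k})$ lies in the interior of $P_0$.
   Context: A (closed, convex) polytope in $\mathbb{R}^k$ is a set of the form $\{\mathbf{x}\in\mathbb{R}^k : \mathbf{a}_j\cdot\mathbf{x}+b_j\ge 0,\ j=1,\dots,J\}$ for finitely many $\mathbf{a}_j\in\mathbb{R}^k$, $b_j\in\mathbb{R}$ (not necessarily bounded). A partition of $\mathbb{R}^k$ is a finite collection of polytopes, each with nonempty interior, whose union is $\mathbb{R}^k$ and whose interiors are pairwise disjoint. *)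

(* Defs.v *)
From HB Require Import structures.
From mathcomp Require Import all_boot all_order all_algebra.
From mathcomp Require Import all_classical all_reals all_analysis.
Set Implicit Arguments. Unset Strict Implicit. Unset Printing Implicit Defensive.
Import Order.TTheory GRing.Theory Num.Theory numFieldTopology.Exports numFieldNormedType.Exports.
Local Open Scope classical_set_scope.
Local Open Scope ring_scope.

(* Points of R^k are row vectors 'rV[R]_k, with the product (= Euclidean) topology. *)

Definition polytope (R : realType) (k : nat) (P : set 'rV[R]_k) : Prop :=
  exists (J : nat) (a : 'I_J -> 'rV[R]_k) (b : 'I_J -> R),
    P = [set x | forall j : 'I_J, 0 <= \sum_(i < k) a j 0 i * x 0 i + b j].

Definition polytope_partition (R : realType) (k m : nat)
    (P : 'I_m -> set 'rV[R]_k) : Prop :=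
  [/\ (forall i, polytope (P i)),
      (forall i, interior (P i) !=set0),
      \bigcup_(i in setT) P i = setT
    & (forall i j, i != j -> interior (P i) `&` interior (P j) = set0)].

(* Main.v *)
Require Import Defs.
From HB Require Import structures.
From mathcomp Require Import all_boot all_order all_algebra.
From mathcomp Require Import all_classical all_reals all_analysis.
From mathcomp Require Import ring lra.
Import Order.TTheory GRing.Theory Num.Theory numFieldTopology.Exports numFieldNormedType.Exports.
Local Open Scope classical_set_scope.
Local Open Scope ring_scope.
Lemma leadG (R : realFieldType) r (c : 'I_r -> R) (e : 'I_r -> nat) (t0 : 'I_r) (x : R) :
  (forall t u : 'I_r, (t < u)%N -> (e t < e u)%N) ->
  (forall t : 'I_r, (t < t0)%N -> c t = 0) -> c t0 != 0 ->
  0 < x -> x <= 1 -> x * \sum_t `|c t| < `|c t0| ->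
  0 < c t0 * \sum_t c t * x ^+ (e t).
Proof.
move=> einc cz cn0 x0 x1 xlt.
have xe : forall p, 0 <= x ^+ p by move=> p; apply: exprn_ge0; apply: ltW.
rewrite (bigD1 t0) //= mulrDr.
set D := \sum_(t | t != t0) _.
have hD : `|D| <= x ^+ (e t0) * (x * \sum_t `|c t|).
  rewrite /D (le_trans (ler_norm_sum _ _ _)) //.
  rewrite mulr_sumr mulr_sumr [X in _ <= X](bigD1 t0) //=.
  have H2 : 0 <= x ^+ e t0 * (x * `|c t0|).
    by apply: mulr_ge0 => //; apply: mulr_ge0 => //; apply: ltW.
  suff H1 : \sum_(i | i != t0) `|c i * x ^+ e i| <= \sum_(i | i != t0) x ^+ e t0 * (x * `|c i|) by lra.
  apply: ler_sum => t tn0.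
  have [tlt|tge] := ltnP t t0.
    rewrite cz // mul0r normr0 mulr0 mulr0; exact: lexx.
  have tgt : (t0 < t)%N by rewrite ltn_neqAle eq_sym tge andbT; apply: contra tn0 => /eqP h; apply/eqP/val_inj.
  have := einc _ _ tgt => et.
  rewrite normrM (ger0_norm (xe _)) mulrC mulrA ler_wpM2r //.
  by rewrite -exprSr; apply: (ler_wiXn2l (ltW x0) x1).
have y0 : 0 < x ^+ e t0 by apply: exprn_gt0.
have C0 : 0 < `|c t0| by rewrite normr_gt0.
have h1 : - (`|c t0| * `|D|) <= c t0 * D.
  rewrite -normrM lerNl -normrN; exact: ler_norm.
have h2 : `|c t0| * `|D| <= `|c t0| * (x ^+ e t0 * (x * \sum_t `|c t|)) by rewrite ler_wpM2l // ltW.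
have h3 : `|c t0| * (x ^+ e t0 * (x * \sum_t `|c t|)) < `|c t0| * (x ^+ e t0 * `|c t0|).
  by rewrite ltr_pM2l // ltr_pM2l.
have h4 : `|c t0| * (x ^+ e t0 * `|c t0|) = c t0 * (c t0 * x ^+ e t0).
  by rewrite mulrCA mulrA -mulrA -expr2 (real_normK (num_real (c t0))); ring.
lra.
Qed.

Definition incr {k n} (s : 'I_k -> 'I_n) := forall a b : 'I_k, (a < b)%N -> (s a < s b)%N.

Lemma constr (R : realType) k n (a : 'rV[R]_k) (b : R) :
  ((forall i, a 0 i = 0) /\ b = 0) \/
  exists c0 : R, c0 != 0 /\ \forall x \near (0 : R)^'+, forall s : 'I_k -> 'I_n,
     incr s -> 0 < c0 * (\sum_i a 0 i * x ^+ (s i).+1 + b).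
Proof.
pose c (t : 'I_k.+1) := if unlift ord0 t is Some u then a 0 u else b.
have [allz|] := pselect (forall t, c t = 0).
  left; split; last by have := allz ord0; rewrite /c unlift_none.
  by move=> i; have := allz (lift ord0 i); rewrite /c liftK.
move=> /existsNP [t1 /eqP t1n0].
pose t0 := [arg min_(t < t1 | c t != 0) (t : nat)].
have [t0n0 t0min] : c t0 != 0 /\ forall t : 'I_k.+1, (t < t0)%N -> c t = 0.
  rewrite /t0; case: arg_minnP => // t tn0 tmin; split => // u ult.
  apply/eqP; apply: contraTT ult => un0; rewrite -leqNgt; exact: tmin.
right; exists (c t0); split => //.
set S := \sum_t `|c t|.
have S0 : 0 <= S by apply: sumr_ge0 => t _; exact: normr_ge0.
have d0 : 0 < `|c t0| / (S + 1) by rewrite divr_gt0 // ?normr_gt0 //; lra.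
near=> x => s sinc.
pose e (t : 'I_k.+1) := if unlift ord0 t is Some u then (s u).+1 else 0%N.
have -> : \sum_i a 0 i * x ^+ (s i).+1 + b = \sum_t c t * x ^+ e t.
  by rewrite big_ord_recl /c /e unlift_none expr0 mulr1 addrC; congr (_ + _); apply: eq_bigr => i _; rewrite liftK.
have x0 : 0 < x by near: x; exact: nbhs_right_gt.
have x1 : x < 1 by near: x; apply: nbhs_right_lt; exact: ltr01.
have xd : x < `|c t0| / (S + 1) by near: x; exact: nbhs_right_lt.
apply: (@leadG _ _ c e t0 x _ t0min) => //; last first.
- rewrite ltr_pdivlMr in xd; last by lra.
  apply: (le_lt_trans _ xd); rewrite ler_wpM2l ?ltW //. suff -> : \sum_t `|c t| = S by lra. by [].
- exact: ltW.
- move=> t u tu; rewrite /e.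
  case: (unliftP ord0 t) => [t'|] tE; case: (unliftP ord0 u) => [u'|] uE //=; rewrite tE uE /= in tu.
  + by rewrite ltnS; apply: sinc; move: tu; rewrite /bump !leq0n.
  + by move: tu; rewrite ltn0.
  + by move: tu; rewrite ltnn.
Unshelve. all: by end_near.
Qed.

Lemma sum_cont (T : topologicalType) (K : numFieldType) (V : normedModType K) (I : Type) (r : seq I)
   (g : I -> T -> V) x :
  (forall i, {for x, continuous (g i)}) ->
  {for x, continuous (fun y => \sum_(i <- r) g i y)}.
Proof.
move=> gc; elim: r => [|i r IH].
  rewrite (_ : (fun y => _) = fun=> 0); first exact: cst_continuous.
  by apply: funext => y; rewrite big_nil.
rewrite (_ : (fun y => _) = (g i) + (fun y => \sum_(j <- r) g j y)).
  exact: continuousD.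
by apply: funext => y; rewrite big_cons.
Qed.

Lemma lin_cont (R : realType) k (a : 'rV[R]_k) (b : R) (x : 'rV[R]_k) :
  {for x, continuous (fun y : 'rV[R]_k => \sum_i a 0 i * y 0 i + b)}.
Proof.
rewrite (_ : (fun y => _) = (fun y : 'rV[R]_k => \sum_i a 0 i * y 0 i) + (fun=> b)) //.
apply: continuousD; last exact: cst_continuous.
apply: sum_cont => i.
rewrite (_ : (fun y => _) = (fun=> a 0 i) \* (fun y : 'rV[R]_k => y 0 i)) //.
apply: continuousM; first exact: cst_continuous.
exact: coord_continuous.
Qed.

Lemma int_of (R : realType) k J (a : 'I_J -> 'rV[R]_k) (b : 'I_J -> R) (x : 'rV[R]_k) :
  (forall j, ((forall i, a j 0 i = 0) /\ b j = 0) \/ 0 < \sum_i a j 0 i * x 0 i + b j) ->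
  interior [set y : 'rV[R]_k | forall j, 0 <= \sum_i a j 0 i * y 0 i + b j] x.
Proof.
move=> H; rewrite /interior /=.
have : \forall y \near x, forall j, 0 <= \sum_i a j 0 i * (y : 'rV[R]_k) 0 i + b j.
  refine (@filter_forall _ _ (fun j (y : 'rV[R]_k) => 0 <= \sum_i a j 0 i * y 0 i + b j) (nbhs x) _ _) => j; case: (H j) => [[az bz]|pos].
    near=> y; rewrite bz addr0 big1 // => i _; by rewrite az mul0r.
  have := cvgr_ge _ (@lin_cont _ _ (a j) (b j) x) _ pos. exact.
by apply: filterS => y.
Unshelve. all: by end_near.
Qed.

Definition pt {R : realType} {k n} (x : R) (s : 'I_k -> 'I_n) : 'rV[R]_k :=
  \row_(t < k) (\row_(j < n) x ^+ j.+1) 0 (s t).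

Lemma ptE (R : realType) k n (x : R) (s : 'I_k -> 'I_n) (a : 'rV[R]_k) :
  \sum_i a 0 i * pt x s 0 i = \sum_i a 0 i * x ^+ (s i).+1.
Proof. by apply: eq_bigr => i _; rewrite /pt !mxE. Qed.

Lemma per_poly (R : realType) k n (Q : set 'rV[R]_k) : polytope Q ->
  \forall x \near (0 : R)^'+,
    (forall s : 'I_k -> 'I_n, incr s -> interior Q (pt x s)) \/
    (forall s : 'I_k -> 'I_n, incr s -> ~ Q (pt x s)).
Proof.
move=> [J [a [b ->]]].
pose T j (x : R) := ((forall i, a j 0 i = 0) /\ b j = 0) \/
   exists c0 : R, c0 != 0 /\ forall s : 'I_k -> 'I_n, incr s ->
     0 < c0 * (\sum_i a j 0 i * x ^+ (s i).+1 + b j).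
have : \forall x \near (0 : R)^'+, forall j, T j x.
  refine (@filter_forall _ _ T _ _ _) => j.
  case: (@constr R k n (a j) (b j)) => [triv|[c0 [c0n H]]].
    by near=> x; left.
  near=> x; right; exists c0; split => //; near: x; exact: H.
move=> H; near=> x.
have HT : forall j, T j x by near: x; exact: H.
have PN : forall j, (((forall i, a j 0 i = 0) /\ b j = 0) \/
     forall s : 'I_k -> 'I_n, incr s -> 0 < \sum_i a j 0 i * x ^+ (s i).+1 + b j) \/
   (forall s : 'I_k -> 'I_n, incr s -> \sum_i a j 0 i * x ^+ (s i).+1 + b j < 0).
  move=> j; case: (HT j) => [t|[c0 [c0n Hc]]]; first by left; left.
  have [c0p|c0n'] := ltP 0 c0.
    left; right => s si; have := Hc s si; by rewrite pmulr_rgt0.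
  have c0neg : c0 < 0 by rewrite lt_neqAle c0n c0n'.
  right => s si; have := Hc s si; by rewrite nmulr_rgt0.
have [[j Nj]|allP] := pselect (exists j, ~ ((((forall i, a j 0 i = 0) /\ b j = 0) \/
     forall s : 'I_k -> 'I_n, incr s -> 0 < \sum_i a j 0 i * x ^+ (s i).+1 + b j))).
  right => s si /= /(_ j); rewrite ptE.
  case: (PN j) => // Hn; have := Hn s si; move=> h1 h2; lra.
left => s si; apply: int_of => j.
have := allP; move=> /forallNP /(_ j) /contrapT [[az bz]|Hp]; first by left.
by right; rewrite ptE; apply: Hp.
Unshelve. all: by end_near.
Qed.

Theorem theorem3p2 (R : realType) (k n m : nat) (hk : (0 < k)%N) (hn : (0 < n)%N)
    (P : 'I_m -> set 'rV[R]_k) :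
  polytope_partition P ->
  exists (i0 : 'I_m) (w : 'rV[R]_n),
    (forall i : 'I_n, 0 < w 0 i < 1) /\
    (forall i j : 'I_n, (i < j)%N -> w 0 j < w 0 i) /\
    (forall s : 'I_k -> 'I_n, (forall a b : 'I_k, (a < b)%N -> (s a < s b)%N) ->
       interior (P i0) (\row_(t < k) w 0 (s t))).
Proof.
move=> [Ppoly _ Pcov _].
pose Q i (x : R) := (forall s : 'I_k -> 'I_n, incr s -> interior (P i) (pt x s)) \/
    (forall s : 'I_k -> 'I_n, incr s -> ~ P i (pt x s)).
have H : \forall x \near (0 : R)^'+, (0 < x /\ x < 1) /\ forall i, Q i x.
  have H1 : \forall x \near (0 : R)^'+, forall i, Q i x.
    refine (@filter_forall _ _ Q _ _ _) => i.
    exact: per_poly.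
  near=> x; split; [split|].
  - near: x; exact: nbhs_right_gt.
  - near: x; apply: nbhs_right_lt; exact: ltr01.
  - near: x; exact: H1.
have [x [[x0 x1] HQ]] := filter_ex H.
have [[s0 s0i]|nos] := pselect (exists s : 'I_k -> 'I_n, incr s); last first.
  have : [set: 'rV[R]_k] 0 by [].
  rewrite -Pcov => -[i1 _ _].
  exists i1, (\row_(j < n) x ^+ j.+1); split; [|split].
  - move=> i; rewrite mxE exprn_gt0 //=.
    by apply: (le_lt_trans _ x1); apply: ler_iXnr => //; apply: ltW.
  - by move=> i j ij; rewrite !mxE ltr_iXn2l.
  - by move=> s si; exfalso; apply: nos; exists s.
have : [set: 'rV[R]_k] (pt x s0) by [].
rewrite -Pcov => -[i0 _ Pi0].
exists i0, (\row_(j < n) x ^+ j.+1); split; [|split].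
- move=> i; rewrite mxE exprn_gt0 //=.
  by apply: (le_lt_trans _ x1); apply: ler_iXnr => //; apply: ltW.
- by move=> i j ij; rewrite !mxE ltr_iXn2l.
- move=> s si; case: (HQ i0) => [HI|HN]; first exact: HI.
  by exfalso; apply: (HN s0 s0i).
Unshelve. all: by end_near.
Qed.
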